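(* Let $d \geq 2$ and let $\varGamma$ be a lattice in $\mathbb{R}^d$. The map $\eta\colon \operatorname{SOS}(\varGamma)\to\mathbb{R}^\bullet/\mathbb{Q}^\bullet$, $R\mapsto[\alpha]$, where $\alpha$ is any element of $\operatorname{scal}_\varGamma(R)$ and $[\alpha]$ denotes its class in $\mathbb{R}^\bullet/\mathbb{Q}^\bullet$, is a group homomorphism with kernel $\operatorname{SOC}(\varGamma)$.
   Context: A lattice in $\mathbb{R}^d$ is a subgroup of the form $\mathbb{Z}b_1\oplus\cdots\oplus\mathbb{Z}b_d$ where $\{b_1,\dots,b_d\}$ is a basis of $\mathbb{R}^d$. Two lattices $\varGamma,\varGamma'$ are commensurate, written $\varGamma\sim\varGamma'$, if $\varGamma\cap\varGamma'$ has finite index both in $\varGamma$ and in $\varGamma'$. $\operatorname{SOC}(\varGamma)=\{R\in\operatorname{SO}(d):\varGamma\sim R\varGamma\}$ (coincidence rotations) and $\operatorname{SOS}(\varGamma)=\{R\in\operatorname{SO}(d):\varGamma\sim\alpha R\varGamma\text{ for some }\alpha>0\}$ (similarity rotations); both are subgroups of $\operatorname{SO}(d)$. For $R\in\operatorname{SO}(d)$, $\operatorname{scal}_\varGamma(R)=\{\alpha\in\mathbb{R}:\varGamma\sim\alpha R\varGamma\}$, which is nonempty for $R\in\operatorname{SOS}(\varGamma)$, and any two of its elements have rational ratio, so $\eta$ is well defined. $\mathbb{R}^\bullet$ and $\mathbb{Q}^\bullet$ denote the multiplicative groups of nonzero real and nonzero rational numbers. *)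

(* Defs.v *)
From HB Require Import structures.
From mathcomp Require Import all_boot all_order all_algebra.
From mathcomp Require Import reals.
Set Implicit Arguments.
Unset Strict Implicit.
Unset Printing Implicit Defensive.
Import Order.TTheory GRing.Theory Num.Theory.
Local Open Scope ring_scope.

Section Defs.
Variables (R : realType) (d : nat).

Definition vset := 'cV[R]_d -> Prop.

Definition is_lattice (L : vset) : Prop :=
  exists B : 'M[R]_d, B \in unitmx /\
    forall v, L v <-> exists z : 'cV[int]_d, v = B *m map_mx (fun k : int => k%:~R) z.

Definition setI_v (A B : vset) : vset := fun v => A v /\ B v.

Definition finite_index (H G : vset) : Prop :=
  exists s : seq 'cV[R]_d, (forall r, r \in s -> G r) /\
    forall g, G g -> exists2 r, r \in s & H (g - r).

Definition commensurate (L L' : vset) : Prop :=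
  finite_index (setI_v L L') L /\ finite_index (setI_v L L') L'.

Definition is_SO (Q : 'M[R]_d) : Prop := Q *m Q^T = 1%:M /\ \det Q = 1.

Definition scaled_rot (a : R) (Q : 'M[R]_d) (L : vset) : vset :=
  fun v => exists2 x, L x & v = a *: (Q *m x).

Definition SOC (L : vset) (Q : 'M[R]_d) : Prop :=
  is_SO Q /\ commensurate L (scaled_rot 1 Q L).

Definition SOS (L : vset) (Q : 'M[R]_d) : Prop :=
  is_SO Q /\ exists a : R, 0 < a /\ commensurate L (scaled_rot a Q L).

Definition scal (L : vset) (Q : 'M[R]_d) (a : R) : Prop :=
  commensurate L (scaled_rot a Q L).

End Defs.

(* equality of classes in R^•/Q^• : a = q b for some nonzero rational q *)
Definition rat_equiv (R : realType) (a b : R) : Prop :=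
  exists q : rat, q != 0 /\ a = ratr q * b.

(* Main.v *)
Require Import Defs.
From HB Require Import structures.
From mathcomp Require Import all_boot all_order all_algebra.
From mathcomp Require Import reals.
From Stdlib Require Import ClassicalEpsilon FunctionalExtensionality PropExtensionality Classical.
Import Order.TTheory GRing.Theory Num.Theory.
Local Open Scope ring_scope.
Set Implicit Arguments.
Unset Strict Implicit.

Section Aux.
Variables (R : realType) (d : nat).
Local Notation V := 'cV[R]_d.
Local Notation setI_v := (@setI_v R d).
Local Notation finite_index := (@finite_index R d).
Local Notation commensurate := (@commensurate R d).

Definition grp (A : V -> Prop) := A 0 /\ forall x y, A x -> A y -> A (x - y).
Definition img (M : 'M[R]_d) (A : V -> Prop) : V -> Prop :=
  fun v => exists2 x, A x & v = M *m x.

Lemma set_ext (A B : V -> Prop) : (forall v, A v <-> B v) -> A = B.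
Proof. move=> h; apply: functional_extensionality => v; apply: propositional_extensionality; exact: h. Qed.

Lemma grpI A B : grp A -> grp B -> grp (setI_v A B).
Proof.
move=> [A0 AB] [B0 BB]; split; first by split.
by move=> x y [? ?] [? ?]; split; auto.
Qed.

Lemma grp_img M A : grp A -> grp (img M A).
Proof.
move=> [A0 AB]; split; first by exists 0; rewrite ?mulmx0.
by move=> _ _ [x Ax ->] [y Ay ->]; exists (x - y); [apply: AB | rewrite mulmxBr].
Qed.

Lemma grp_mulrn A x m : grp A -> A x -> A (x *+ m).
Proof.
move=> [A0 AB] Ax; elim: m => [|m IH]; first by rewrite mulr0n.
have -> : x *+ m.+1 = x *+ m - (0 - x) by rewrite mulrS sub0r opprK addrC.
by apply: (AB) => //; apply: (AB).
Qed.

Lemma lattice_grp L : is_lattice L -> grp L.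
Proof.
move=> [B [_ HB]]; split.
  apply/HB; exists 0.
  have -> : map_mx (fun k : int => k%:~R) (0 : 'cV[int]_d) = 0 :> 'cV[R]_d.
    by apply/matrixP => i j; rewrite !mxE.
  by rewrite mulmx0.
move=> x y /HB [zx ->] /HB [zy ->]; apply/HB; exists (zx - zy).
rewrite -mulmxBr; congr (B *m _); apply/matrixP => i j; rewrite !mxE.
by rewrite intrB.
Qed.

Lemma setIC_v A B : setI_v A B = setI_v B A.
Proof. by apply: set_ext => v; split => -[]. Qed.

Lemma img_comp M N A : img M (img N A) = img (M *m N) A.
Proof.
apply: set_ext => v; split.
  by move=> [_ [x Ax ->] ->]; exists x => //; rewrite mulmxA.
by move=> [x Ax ->]; exists (N *m x); [exists x | rewrite mulmxA].
Qed.

Lemma img1 A : img 1%:M A = A.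
Proof.
apply: set_ext => v; split; first by move=> [x Ax ->]; rewrite mul1mx.
by move=> Av; exists v; rewrite ?mul1mx.
Qed.

Lemma scaled_rotE a Q L : scaled_rot a Q L = img (a *: Q) L.
Proof. by apply: set_ext => v; split => -[x Lx ->]; exists x; rewrite ?scalemxAl. Qed.

Lemma comm_sym A B : commensurate A B -> commensurate B A.
Proof. by move=> [h1 h2]; split; rewrite setIC_v. Qed.

Lemma comm_img M A B : commensurate A B -> commensurate (img M A) (img M B).
Proof.
have H : forall A B, finite_index (setI_v A B) A ->
    finite_index (setI_v (img M A) (img M B)) (img M A).
  move=> A' B' [s [sA Hs]]; exists (map (mulmx M) s); split.
    by move=> _ /mapP [r rs ->]; exists r => //; apply: sA.
  move=> _ [x Ax ->]; have [r rs [h1 h2]] := Hs x Ax.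
  exists (M *m r); first exact: map_f.
  by rewrite -mulmxBr; split; [exists (x - r) | exists (x - r)].
move=> [h1 h2]; split; first exact: H.
by rewrite setIC_v; apply: H; rewrite setIC_v.
Qed.

Lemma FI_trans A B C : grp A -> grp B -> grp C ->
  finite_index (setI_v A B) A -> finite_index (setI_v B C) B ->
  finite_index (setI_v A C) A.
Proof.
move=> [A0 AA] [B0 BB] [C0 CC] [s1 [s1A H1]] [s2 [s2B H2]].
pose P t a := A a /\ ((exists a', A a' /\ setI_v B C (a' - t)) -> setI_v B C (a - t)).
have exP : forall t, exists a, P t a.
  move=> t; case: (classic (exists a', A a' /\ setI_v B C (a' - t))).
    by move=> [a' [Aa' h]]; exists a'; split.
  by move=> nh; exists 0; split => // h; exfalso; apply: nh.
pose pick t := epsilon (inhabits (0 : V)) (P t).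
have pickP t : P t (pick t) by apply: epsilon_spec.
exists [seq pick (r1 + r2) | r1 <- s1, r2 <- s2]; split.
  by move=> r /allpairsP [[r1 r2] [_ _ ->]]; case: (pickP (r1 + r2)).
move=> a Aa; have [r1 r1s [h1A h1B]] := H1 a Aa.
have [r2 r2s [h2B h2C]] := H2 _ h1B.
have ex : exists a', A a' /\ setI_v B C (a' - (r1 + r2)).
  exists a; split => //; have -> : a - (r1 + r2) = a - r1 - r2 by rewrite opprD addrA.
  by split.
have [Ap Hp] := pickP (r1 + r2); have [hpB hpC] := Hp ex.
exists (pick (r1 + r2)); first by apply/allpairsP; exists (r1, r2).
have e : a - pick (r1 + r2) = (a - r1 - r2) - (pick (r1 + r2) - (r1 + r2)).
  set p := pick _.
  by rewrite opprB addrA -[a - r1 - r2]addrA -opprD addrNK.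
split; last by rewrite e; apply: (CC).
by apply: (AA).
Qed.

Lemma comm_trans A B C : grp A -> grp B -> grp C ->
  commensurate A B -> commensurate B C -> commensurate A C.
Proof.
move=> gA gB gC [h1 h2] [h3 h4]; split; first exact: (FI_trans gA gB gC).
rewrite setIC_v; apply: (FI_trans gC gB gA); by rewrite setIC_v.
Qed.


Lemma mulmxMn' m n p (B : 'M[R]_(m, n)) (x : 'M[R]_(n, p)) k :
  B *m (x *+ k) = (B *m x) *+ k.
Proof. elim: k => [|k IH]; first by rewrite !mulr0n mulmx0. by rewrite !mulrS mulmxDr IH. Qed.

Lemma ratl L a b : (0 < d)%N -> is_lattice L ->
  finite_index (setI_v (img a%:M L) (img b%:M L)) (img b%:M L) ->
  exists n : nat, exists k : int, (0 < n)%N /\ b *+ n = a * k%:~R.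
Proof.
move=> d0 Lat; have gL := lattice_grp Lat; move: Lat => [B [uB HB]].
move=> [s [_ Hs]].
pose i0 := Ordinal d0.
pose D := delta_mx i0 (0 : 'I_1) : 'cV[R]_d.
pose x0 := B *m D.
have Lx0 : L x0.
  apply/HB; exists (delta_mx i0 0); congr (B *m _); apply/matrixP=> i j.
  by rewrite !mxE; case: (_ && _).
pose y (m : nat) := b%:M *m (x0 *+ m).
have Hy : forall m : nat, exists r, r \in s /\
    setI_v (img a%:M L) (img b%:M L) (y m - r).
  move=> m; have [r rs h] := Hs (y m) (ex_intro2 _ _ (x0 *+ m) (grp_mulrn m gL Lx0) erefl).
  by exists r.
pose f m := proj1_sig (constructive_indefinite_description _ (Hy m)).
have fP m : f m \in s /\ setI_v (img a%:M L) (img b%:M L) (y m - f m).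
  exact: (proj2_sig (constructive_indefinite_description _ (Hy m))).
pose t := map f (iota 0 (size s).+1).
have : ~~ uniq t.
  apply/negP => ut; have := uniq_leq_size ut.
  have sub : {subset t <= s} by move=> r /mapP [m _ ->]; case: (fP m).
  by move/(_ s sub); rewrite size_map size_iota ltnn.
case/(uniqPn 0) => i [j [ij jt e]].
rewrite size_map size_iota in jt.
have it : (i < (size s).+1)%N by apply: ltn_trans jt.
rewrite !(nth_map 0%N) ?size_iota // !nth_iota // !add0n in e.
have [_ [hi _]] := fP i; have [_ [hj _]] := fP j.
have [_ gA] := grp_img a%:M gL.
have := gA _ _ hj hi; rewrite e opprB addrA addrNK.
move=> [w /HB [z ->]] eq.
exists (j - i)%N, (z i0 0); split; first by rewrite subn_gt0.
have yj : y j = y i + b%:M *m (B *m (D *+ (j - i))).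
  by rewrite /y -mulmxDr mulmxMn' -mulrnDr subnKC // ltnW.
have eq2 : B *m (b *: (D *+ (j - i))) = B *m (a *: map_mx (fun k : int => k%:~R) z).
  rewrite -!scalemxAr -!mul_scalar_mx -eq yj [y i + _]addrC addrK.
  by [].
move: (congr1 (mulmx (invmx B)) eq2); rewrite !mulKmx //.
move/matrixP/(_ i0 0); rewrite !mxE mulmxnE !mxE !eqxx /= mulr_natr.
by [].
Qed.


Lemma latk L (k : int) : is_lattice L -> k != 0 ->
  commensurate L (img (k%:~R)%:M L).
Proof.
move=> Lat k0; have gL := lattice_grp Lat; move: Lat => [B [uB HB]].
have sub : forall x, img (k%:~R)%:M L x -> L x.
  move=> _ [x /HB [z ->] ->]; apply/HB; exists (k *: z).
  rewrite mul_scalar_mx scalemxAr; congr (B *m _); apply/matrixP => i j.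
  by rewrite !mxE intrM.
split; last first.
  exists [:: 0]; split; first by move=> r; rewrite inE => /eqP ->; exists 0; [case: gL|rewrite mulmx0].
  by move=> g hg; exists 0; rewrite ?inE // subr0; split => //; apply: sub.
pose K := `|k|%N.
pose F (w : 'cV['I_K]_d) : 'cV[R]_d := B *m map_mx (fun x : 'I_K => (x : nat)%:R) w.
exists (map F (enum 'cV['I_K]_d)); split.
  move=> _ /mapP [w _ ->]; apply/HB; exists (map_mx (fun x : 'I_K => (x : nat)%:Z) w).
  by congr (B *m _); apply/matrixP => i j; rewrite !mxE.
move=> g /HB [z ->].
have hK i j : (`|(z i j %% k)%Z|%N < K)%N.
  by rewrite -ltz_nat !abszE ger0_norm ?modz_ge0 // ltz_mod.
pose w := \matrix_(i, j) Ordinal (hK i j).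
exists (F w); first by apply: map_f; rewrite mem_enum.
pose zq := \matrix_(i, j) (z i j %/ k)%Z.
have e : B *m map_mx (fun x : int => x%:~R) z - F w =
    (k%:~R)%:M *m (B *m map_mx (fun x : int => x%:~R) zq).
  rewrite /F -mulmxBr mul_scalar_mx scalemxAr; congr (B *m _); apply/matrixP => i j.
  rewrite !mxE /= natr_absz ger0_norm ?modz_ge0 //.
  by rewrite {1}(divz_eq (z i j) k) intrD intrM mulrC addrK.
rewrite e; split; first by apply: sub; exists (B *m map_mx (fun x : int => x%:~R) zq) => //; apply/HB; exists zq.
by exists (B *m map_mx (fun x : int => x%:~R) zq) => //; apply/HB; exists zq.
Qed.


Lemma unit_SO (Q : 'M[R]_d) : is_SO Q -> Q \in unitmx.
Proof. by move=> [_ h]; rewrite unitmxE h unitr1. Qed.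

Lemma key L M a b : (0 < d)%N -> is_lattice L -> M \in unitmx ->
  commensurate L (img (a *: M) L) -> commensurate L (img (b *: M) L) ->
  rat_equiv a b.
Proof.
move=> d0 Lat uM ha hb; have gL := lattice_grp Lat.
have h : commensurate (img (a *: M) L) (img (b *: M) L).
  apply: (comm_trans (grp_img _ gL) gL (grp_img _ gL)) => //; exact: comm_sym.
have := comm_img (invmx M) h; rewrite !img_comp -!scalemxAr mulVmx // !scalemx1.
move=> [h1 h2].
have [n [k [n0 e1]]] := ratl d0 Lat h2.
rewrite setIC_v in h1.
have [n' [k' [n'0 e2]]] := ratl d0 Lat h1.
have [k0|k0] := eqVneq k 0.
  move: e1; rewrite k0 mulr0 => /eqP; rewrite mulrn_eq0 (negPf (lt0n_neq0 n0)) /= => /eqP b0.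
  move: e2; rewrite b0 mul0r => /eqP; rewrite mulrn_eq0 (negPf (lt0n_neq0 n'0)) /= => /eqP a0.
  by exists 1; split; [exact: oner_neq0 | rewrite rmorph1 mul1r a0].
have kR : (k%:~R : R) != 0 by rewrite intr_eq0.
exists (n%:R / k%:~R); split.
  by rewrite mulf_neq0 // ?invr_eq0 ?intr_eq0 ?pnatr_eq0 ?lt0n_neq0.
rewrite rmorphM /= fmorphV ratr_nat rmorph_int.
apply: (mulIf kR); rewrite mulrAC divfK // -e1 -mulr_natr mulrC.
by rewrite mul1r mulr_natr.
Qed.


Lemma latq L (q : rat) : is_lattice L -> q != 0 ->
  commensurate L (img (ratr q : R)%:M L).
Proof.
move=> Lat q0; have gL := lattice_grp Lat.
have n0 : numq q != 0 by rewrite numq_eq0.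
have dn0 : denq q != 0 by rewrite denq_neq0.
have dR : ((denq q)%:~R : R) != 0 by rewrite intr_eq0.
have h1 := latk Lat n0.
have h2 := comm_img ((denq q)%:~R^-1)%:M (latk Lat dn0).
rewrite img_comp -scalar_mxM mulVf // img1 in h2.
have h3 := comm_img ((numq q)%:~R)%:M (comm_sym h2).
rewrite img_comp -scalar_mxM in h3.
exact: (comm_trans gL (grp_img _ gL) (grp_img _ gL) h1 h3).
Qed.

End Aux.

Unset Implicit Arguments.
Set Strict Implicit.

Theorem mainTheorem2 (R : realType) (d : nat) (L : 'cV[R]_d -> Prop) :
  (2 <= d)%N -> is_lattice L ->
  (* eta is well defined: all elements of scal_L(Q) have the same class *)
  (forall Q : 'M[R]_d, SOS L Q ->
     forall a b : R, scal L Q a -> scal L Q b -> rat_equiv a b) /\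
  (* eta is a homomorphism: [c] = [a][b] for c in scal(QS), a in scal(Q), b in scal(S) *)
  (forall Q S : 'M[R]_d, SOS L Q -> SOS L S ->
     forall a b c : R, scal L Q a -> scal L S b -> scal L (Q *m S) c ->
       rat_equiv c (a * b)) /\
  (* kernel of eta is SOC(L) *)
  (forall Q : 'M[R]_d,
     SOC L Q <-> (SOS L Q /\ forall a : R, scal L Q a -> rat_equiv a 1)).
Proof.
move=> d2 Lat; have d0 : (0 < d)%N by apply: leq_trans d2.
have gL := lattice_grp Lat.
split.
  move=> Q [SQ _] a b; rewrite /scal !scaled_rotE => ha hb.
  exact: (key d0 Lat (unit_SO SQ) ha hb).
split.
  move=> Q S [SQ _] [SS _] a b c; rewrite /scal !scaled_rotE => ha hb hc.
  have hb' := comm_img (a *: Q) hb.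
  rewrite img_comp -scalemxAl -scalemxAr scalerA in hb'.
  have hab := comm_trans gL (grp_img _ gL) (grp_img _ gL) ha hb'.
  have uQS : Q *m S \in unitmx by rewrite unitmx_mul !unit_SO.
  exact: (key d0 Lat uQS hc hab).
move=> Q; split.
  move=> [SQ h]; split; first by split => //; exists 1; split => //; exact: ltr01.
  move=> a; rewrite /scal scaled_rotE => ha; rewrite scaled_rotE in h.
  exact: (key d0 Lat (unit_SO SQ) ha h).
move=> [[SQ [a [a0 ha]]] Hk]; split => //.
have [q [q0 aq]] := Hk a ha; rewrite mulr1 in aq.
rewrite /scal scaled_rotE in ha; rewrite scaled_rotE.
have h := comm_img (a *: Q) (latq Lat (invr_neq0 q0)).
rewrite img_comp mul_mx_scalar scalerA aq fmorphV mulVf ?fmorph_eq0 // scale1r in h; rewrite aq in ha.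
rewrite scale1r; exact: (comm_trans gL (grp_img _ gL) (grp_img _ gL) ha h).
Qed.
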